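(* Let $a\in R$ and let $u\in\mathbb{F}_q$ be the reduction of $a$ modulo $2$. Then $$\eta_a^2=2^m\sum_{Z\in\mathcal{T},\ f_u(z)=0}i^{\mathrm{T}(aZ+2Z^3)},\qquad \eta_a\overline{\eta_a}=2^m\sum_{Z\in\mathcal{T},\ h_u(z)=0}i^{\mathrm{T}(aZ+2Z^3)},$$ $$\eta_a^4=2^m(-1)^{\mathrm{tr}(u^3)}|F_u|\,\eta_a\overline{\eta_a},\qquad(\eta_a\overline{\eta_a})^2=2^m|F_u|\,\eta_a\overline{\eta_a},\qquad \eta_a^3\overline{\eta_a}=2^m|F_u|\,\eta_a^2.$$
   Context: $q=2^m$; $R=GR(4,m)=\mathbb{Z}_4[x]/(f(x))$ with $f$ monic of degree $m$ irreducible mod 2; $\mathcal{T}=\{0,1,\beta,\dots,\beta^{q-2}\}$ is the Teichmüller set ($\beta\in R^*$ of order $q-1$); for $Z\in\mathcal{T}$, $z$ denotes its reduction mod 2 in $\mathbb{F}_q$. $\mathrm{T}:R\to\mathbb{Z}_4$ is the trace $\mathrm{T}(w)=\sum_{j=0}^{m-1}\sigma^j(w)$ with $\sigma(A+2B)=A^2+2B^2$ ($A,B\in\mathcal{T}$), and $\mathrm{tr}$ is the absolute trace $\mathbb{F}_q\to\mathbb{F}_2$. $\eta_a=\sum_{X\in\mathcal{T}}i^{\mathrm{T}(aX+2X^3)}$ and $\overline{\eta_a}$ is its complex conjugate. $f_u(z)=z^2+u^2z+\sqrt{z}+u$ and $h_u(z)=z^2+u^2z+\sqrt z$ (where $\sqrt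 z$ is the unique square root in $\mathbb{F}_q$), and $F_u\subseteq\mathbb{F}_q$ is the set of zeros of $f_u$ in $\mathbb{F}_q$. *)

(* Defs.v *)
(* GR(4,m) is modelled literally as Z_4[x]/(f) via qpoly,
   F_q as F_2[x]/(f mod 2). *)
From HB Require Import structures.
From mathcomp Require Import all_boot all_order all_algebra all_field.
Set Implicit Arguments. Unset Strict Implicit. Unset Printing Implicit Defensive.
Import Order.TTheory GRing.Theory Num.Theory.
Local Open Scope ring_scope.

Definition red2 (x : 'Z_4) : 'F_2 := (val x)%:R.

Definition fbar (f : {poly 'Z_4}) : {poly 'F_2} := map_poly red2 f.

Notation GR f := {poly %/ f}.
Notation Fq f := {poly %/ (fbar f)}.

Definition redR (f : {poly 'Z_4}) (w : GR f) : Fq f :=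
  in_qpoly (fbar f) (map_poly red2 (w : {poly 'Z_4})).

Definition teich (f : {poly 'Z_4}) (m : nat) (beta : GR f) : {set GR f} :=
  0 |: [set beta ^+ (val k) | k : 'I_(2 ^ m - 1)].

(* Frobenius sigma(A + 2B) = A^2 + 2B^2 with A, B in T
   (the 2-adic decomposition is unique) *)
Definition sigmaF (f : {poly 'Z_4}) (m : nat) (beta : GR f) (w : GR f) : GR f :=
  match [pick p : (GR f * GR f)%type |
           (p.1 \in teich m beta) && (p.2 \in teich m beta)
           && (w == p.1 + 2%:R * p.2)] with
  | Some p => p.1 ^+ 2 + 2%:R * p.2 ^+ 2
  | None => 0
  end.

(* trace T : R -> Z_4, T(w) = sum_{j<m} sigma^j(w); the sum is a constant of R,
   i.e. an element of Z_4, read off as the constant coefficient *)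
Definition trGR (f : {poly 'Z_4}) (m : nat) (beta : GR f) (w : GR f) : 'Z_4 :=
  ((\sum_(j < m) iter j (sigmaF m beta) w : GR f) : {poly 'Z_4})`_0.

Definition iexp (f : {poly 'Z_4}) (m : nat) (beta : GR f) (w : GR f) : algC :=
  'i ^+ (val (trGR m beta w)).

Definition etaGR (f : {poly 'Z_4}) (m : nat) (beta : GR f) (a : GR f) : algC :=
  \sum_(X in teich m beta) iexp m beta (a * X + 2%:R * X ^+ 3).

(* absolute trace F_q -> F_2 (valued in the prime subfield of F_q) *)
Definition atr (f : {poly 'Z_4}) (m : nat) (z : Fq f) : Fq f :=
  \sum_(j < m) z ^+ (2 ^ j).

Definition sqrtF (f : {poly 'Z_4}) (z : Fq f) : Fq f :=
  odflt 0 [pick y : Fq f | y ^+ 2 == z].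

Definition f_u (f : {poly 'Z_4}) (u z : Fq f) : Fq f :=
  z ^+ 2 + u ^+ 2 * z + sqrtF z + u.
Definition h_u (f : {poly 'Z_4}) (u z : Fq f) : Fq f :=
  z ^+ 2 + u ^+ 2 * z + sqrtF z.

Definition Fu (f : {poly 'Z_4}) (u : Fq f) : {set Fq f} := [set z | f_u u z == 0].

(* Main.v *)
Require Import Defs.
From HB Require Import structures.
From mathcomp Require Import all_boot all_order all_algebra all_field.
From mathcomp Require Import ring zify.
Import Order.TTheory GRing.Theory Num.Theory.
Local Open Scope ring_scope.

Lemma Z4_all (P : 'Z_4 -> Prop) : P 0 -> P 1 -> P 2%:R -> P 3%:R -> forall x, P x.
Proof.
move=> p0 p1 p2 p3 x.
rewrite -(natr_Zp x).
by case: x => -[|[|[|[|n]]]] //.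
Qed.

Lemma red2D (x y : 'Z_4) : red2 (x + y) = red2 x + red2 y.
Proof. by move: x y; apply: Z4_all; apply: Z4_all; apply/eqP. Qed.
Lemma red2M (x y : 'Z_4) : red2 (x * y) = red2 x * red2 y.
Proof. by move: x y; apply: Z4_all; apply: Z4_all; apply/eqP. Qed.
Lemma red21 : red2 1 = 1. Proof. by apply/eqP. Qed.
Lemma red2B (x y : 'Z_4) : red2 (x - y) = red2 x - red2 y.
Proof. by move: x y; apply: Z4_all; apply: Z4_all; apply/eqP. Qed.
HB.instance Definition _ := GRing.isZmodMorphism.Build 'Z_4 'F_2 red2 red2B.
HB.instance Definition _ := GRing.isMonoidMorphism.Build 'Z_4 'F_2 red2 (conj red21 red2M).

Definition half4 (x : 'Z_4) : 'Z_4 := (val x %/ 2)%:R.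
Lemma half4_0 : half4 0 = 0. Proof. by apply/eqP. Qed.
Lemma Z4_evenb (x : 'Z_4) : (red2 x == 0) ==> (half4 x + half4 x == x).
Proof. by move: x; apply: Z4_all. Qed.
Lemma Z4_even (x : 'Z_4) : red2 x = 0 -> half4 x + half4 x = x.
Proof. by move=> h; have /implyP/(_ (introT eqP h))/eqP := Z4_evenb x. Qed.
Lemma Z4_dbl (x : 'Z_4) : (x + x == 0) = (red2 x == 0).
Proof. by move: x; apply: Z4_all. Qed.
Lemma Z4_four (x : 'Z_4) : x + x + x + x = 0.
Proof. by move: x; apply: Z4_all; apply/eqP. Qed.
Lemma Z4_oddb (x : 'Z_4) : (red2 x == 1) ==> (val (x + x) == 2%N).
Proof. by move: x; apply: Z4_all. Qed.
Lemma Z4_odd (x : 'Z_4) : red2 x = 1 -> val (x + x) = 2%N.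
Proof. by move=> h; have /implyP/(_ (introT eqP h))/eqP := Z4_oddb x. Qed.
Lemma Z4_dbl0 (x : 'Z_4) : red2 x = 0 -> x + x = 0.
Proof. by move=> h; apply/eqP; rewrite Z4_dbl h. Qed.

Section Main.
Variables (m : nat) (f : {poly 'Z_4}).
Hypotheses (f_monic : f \is monic) (f_size : size f = m.+1)
  (f_irr : irreducible_poly (fbar f)).
Variable beta : GR f.
Hypotheses (beta_ord : beta ^+ (2 ^ m - 1) = 1)
  (beta_prim : forall k : nat, (0 < k < 2 ^ m - 1)%N -> beta ^+ k != 1).

Local Notation R := (GR f).
Local Notation F := (Fq f).
Local Notation fb := (fbar f).

Lemma fb_size : size fb = m.+1.
Proof.
by rewrite /fbar size_map_poly_id0 // (monicP f_monic) rmorph1 oner_neq0.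
Qed.
Lemma fb_monic : fb \is monic.
Proof.
apply/monicP; rewrite /fbar lead_coef_map_id0 ?rmorph0 ?(monicP f_monic) ?rmorph1 //.

Qed.
Lemma m_gt0 : (0 < m)%N.
Proof. by case: f_irr; rewrite fb_size ltnS. Qed.
Lemma mkf : mk_monic f = f.
Proof. by rewrite /mk_monic f_size ltnS m_gt0 f_monic. Qed.
Lemma mkfb : mk_monic fb = fb.
Proof. by rewrite /mk_monic fb_size ltnS m_gt0 fb_monic. Qed.

Lemma size_R (w : R) : (size (w : {poly 'Z_4}) <= m)%N.
Proof.
have h1 := size_mk_monic w.
have h2 : size (mk_monic f) = m.+1 by rewrite mkf.
by rewrite -ltnS -h2.
Qed.

Lemma qvalD (h : {poly 'Z_4}) (x y : {poly %/ h}) : val (x + y) = val x + val y.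
Proof. by []. Qed.
Lemma qvalD2 (h : {poly 'F_2}) (x y : {poly %/ h}) : val (x + y) = val x + val y.
Proof. by []. Qed.
Lemma qvalN (h : {poly 'Z_4}) (x : {poly %/ h}) : val (- x) = - val x.
Proof. by []. Qed.
Lemma qvalN2 (h : {poly 'F_2}) (x : {poly %/ h}) : val (- x) = - val x.
Proof. by []. Qed.

Lemma redR_val (w : R) : val (redR w) = map_poly red2 (val w).
Proof.
rewrite /redR; apply: in_qpoly_small; rewrite mkfb fb_size ltnS.
by rewrite (leq_trans (size_poly _ _)) ?size_R.
Qed.

Lemma redRD (x y : R) : redR (x + y) = redR x + redR y.
Proof. by apply: val_inj; rewrite qvalD2 !redR_val qvalD raddfD. Qed.
Lemma redRN (x : R) : redR (- x) = - redR x.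
Proof. by apply: val_inj; rewrite qvalN2 !redR_val qvalN raddfN. Qed.
Lemma redR0 : redR (0 : R) = 0.
Proof. by rewrite -(subrr 0) redRD redRN subrr. Qed.

Lemma qvalM0 (x y : R) : val (x * y) = Pdiv.CommonRing.rmodp (val x * val y) (mk_monic f).
Proof. by []. Qed.
Lemma qvalM (x y : R) : val (x * y) = Pdiv.CommonRing.rmodp (val x * val y) f.
Proof. rewrite qvalM0; congr (Pdiv.CommonRing.rmodp _ _); exact: mkf. Qed.

Lemma inq_modf (P : {poly 'Z_4}) :
  in_qpoly fb (map_poly red2 (Pdiv.CommonRing.rmodp P f)) = in_qpoly fb (map_poly red2 P).
Proof.
rewrite [in RHS](Pdiv.RingMonic.rdivp_eq f_monic P) rmorphD rmorphM /= in_qpolyD.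
suff -> : in_qpoly fb (map_poly red2 (Pdiv.CommonRing.rdivp P f) * fb) = 0 by rewrite add0r.
apply: val_inj => /=; rewrite mkfb Pdiv.RingMonic.rmodp_mull //; exact: fb_monic.
Qed.

Lemma redRM (x y : R) : redR (x * y) = redR x * redR y.
Proof.
rewrite {1}/redR qvalM inq_modf rmorphM /=.
rewrite -!redR_val.
by [].
Qed.

Lemma qvalC1 : val (1 : R) = 1. Proof. by []. Qed.
Lemma redR1 : redR (1 : R) = 1.
Proof. by rewrite /redR qvalC1 rmorph1 in_qpoly1. Qed.

Lemma redRB (x y : R) : redR (x - y) = redR x - redR y.
Proof. by rewrite redRD redRN. Qed.
Lemma redRX (x : R) n : redR (x ^+ n) = redR x ^+ n.
Proof. by elim: n => [|n IH]; rewrite ?expr0 ?redR1 // !exprS redRM IH. Qed.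
Lemma redR_sum (I : Type) (r : seq I) (P : pred I) (G : I -> R) :
  redR (\sum_(i <- r | P i) G i) = \sum_(i <- r | P i) redR (G i).
Proof.
by apply: (big_morph _ redRD redR0).
Qed.

Lemma F_dbl (x : F) : x + x = 0.
Proof.
apply: val_inj; rewrite qvalD2; apply/polyP => i; rewrite coefD coef0.
by rewrite -mulr2n -mulr_natl (_ : (2%:R : 'F_2) = 0) ?mul0r //; apply/eqP.
Qed.

Lemma R4 (x : R) : x + x + x + x = 0.
Proof.
apply: val_inj; rewrite !qvalD; apply/polyP => i.
by rewrite !coefD coef0 Z4_four.
Qed.

Lemma redR0P (w : R) : redR w = 0 <-> forall i, red2 (val w)`_i = 0.
Proof.
split=> [h i | h].
  have e : val (redR w) = val (0 : F) by rewrite h.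
  rewrite redR_val in e.
  by have := congr1 (fun p : {poly 'F_2} => p`_i) e; rewrite coef_map_id0 ?rmorph0 //= coef0.
by apply: val_inj; rewrite redR_val; apply/polyP => i; rewrite coef_map_id0 ?rmorph0 // h coef0.
Qed.

Lemma redR_dbl (w : R) : (w + w = 0) <-> redR w = 0.
Proof.
split => [h | /redR0P h]; first apply/redR0P => i.
  by apply/eqP; rewrite -Z4_dbl -coefD -qvalD h coef0.
by apply: val_inj; rewrite qvalD; apply/polyP => i; rewrite coefD coef0; apply/eqP; rewrite Z4_dbl h.
Qed.

Lemma small_f (p : {poly 'Z_4}) : (size p <= m)%N -> val (in_qpoly f p) = p.
Proof. by move=> h; apply: in_qpoly_small; rewrite mkf f_size ltnS. Qed.

Lemma redR_half (w : R) : redR w = 0 -> exists C : R, w = C + C.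
Proof.
move/redR0P => h.
have hs : (size (map_poly half4 (val w)) <= m)%N.
  by rewrite (leq_trans (size_poly _ _)) // size_R.
exists (in_qpoly f (map_poly half4 (val w))).
apply: val_inj; rewrite qvalD small_f //; apply/polyP => i.
by rewrite coefD coef_map_id0 ?half4_0 // Z4_even.
Qed.

Lemma dbl_eq (x y : R) : x + x = y + y <-> redR x = redR y.
Proof.
split => [h | h].
  apply/eqP; rewrite -subr_eq0 -redRB; apply/eqP/redR_dbl.
  by rewrite addrACA -opprD h subrr.
have /redR_dbl : redR (x - y) = 0 by rewrite redRB h subrr.
by rewrite addrACA -opprD => /eqP; rewrite subr_eq0 => /eqP.
Qed.

Local Notation q := (2 ^ m)%N.
Local Notation T := (teich m beta).

Lemma q_gt1 : (1 < q)%N.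
Proof. by rewrite -{1}(expn0 2) ltn_exp2l // m_gt0. Qed.
Lemma q_odd : odd (q - 1).
Proof.
rewrite oddB ?expn_gt0 // oddX /=.
by have := m_gt0; case: (m).
Qed.

Lemma beta_inv k : beta ^+ (k * (q - 2)) * beta ^+ k = 1.
Proof.
rewrite -exprD -{2}(muln1 k) -mulnDr (_ : (q - 2 + 1 = q - 1)%N).
  by rewrite mulnC exprM beta_ord expr1n.
by have := q_gt1; lia.
Qed.

Lemma beta_canc k (x y : R) : beta ^+ k * x = beta ^+ k * y -> x = y.
Proof. by move=> e; rewrite -[x]mul1r -[y]mul1r -(beta_inv k) -!mulrA e. Qed.

Lemma beta_neq0 k : beta ^+ k != 0.
Proof.
apply/eqP => e; have := beta_inv k; rewrite e mulr0 => h.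
by move: (oner_neq0 R); rewrite -h eqxx.
Qed.

Lemma beta_inj (k l : nat) : (k < q - 1)%N -> (l < q - 1)%N -> beta ^+ k = beta ^+ l -> k = l.
Proof.
wlog kl : k l / (k <= l)%N.
  move=> H hk hl e. case: (leqP k l) => kl. exact: H.
  apply/esym/H => //. apply: ltnW. exact kl.
move=> hk hl e; have [->//|kl'] := eqVneq k l.
have {}kl' : (k < l)%N by rewrite ltn_neqAle kl' kl.
exfalso.
have h1 : beta ^+ (l - k) = 1.
  apply: (@beta_canc k). rewrite -exprD (subnKC (ltnW kl')) mulr1. exact/esym.
have h2 : (0 < l - k < q - 1)%N. lia.
by move: (beta_prim _ h2); rewrite h1 eqxx.
Qed.
Lemma teichP (X : R) : reflect (X = 0 \/ exists2 k, (k < q - 1)%N & X = beta ^+ k) (X \in T).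
Proof.
rewrite /teich in_setU1; apply: (iffP orP) => [[/eqP -> | /imsetP[k _ ->]] | [-> | [k hk ->]]].
- by left.
- by right; exists k.
- by left.
- by right; apply/imsetP; exists (Ordinal hk).
Qed.

Lemma teich0 : (0 : R) \in T.
Proof. by apply/teichP; left. Qed.

Lemma teich_beta k : beta ^+ k \in T.
Proof.
apply/teichP; right; exists (k %% (q - 1))%N; last by rewrite expr_mod.
by rewrite ltn_mod; have := q_gt1; lia.
Qed.

Lemma teich1 : (1 : R) \in T.
Proof. by rewrite -(expr0 beta) teich_beta. Qed.

Lemma teichM (X Y : R) : X \in T -> Y \in T -> X * Y \in T.
Proof.
move=> /teichP[-> | [k _ ->]]; first by rewrite mul0r teich0.
move=> /teichP[-> | [l _ ->]]; first by rewrite mulr0 teich0.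
by rewrite -exprD teich_beta.
Qed.

Lemma teichX (X : R) n : X \in T -> X ^+ n \in T.
Proof. by move=> hX; elim: n => [|n IH]; rewrite ?expr0 ?teich1 // exprS teichM. Qed.

Lemma teich_q (X : R) : X \in T -> X ^+ q = X.
Proof.
move=> /teichP[-> | [k _ ->]].
  by rewrite expr0n (_ : (q == 0)%N = false) ?mulr0n //; have := q_gt1; case: (2 ^ m)%N.
have bq : beta ^+ q = beta.
  have -> : q = ((q - 1) + 1)%N by have := q_gt1; lia.
  by rewrite exprD beta_ord mul1r expr1.
by rewrite -exprM mulnC exprM bq.
Qed.

Lemma card_T : #|T| = q.
Proof.
rewrite /teich cardsU1 card_in_imset.
  rewrite card_ord; have -> : (0 : R) \notin [set beta ^+ val k | k : 'I_(q - 1)].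
    apply/imsetP => -[k _ /esym e].
    by have := beta_neq0 k; rewrite e eqxx.
  by rewrite add1n subn1 prednK // ltnW // q_gt1.
move=> k l _ _ /= e; apply: val_inj; exact: beta_inj (ltn_ord k) (ltn_ord l) e.
Qed.

Lemma no_double d : (0 < d < q - 1)%N -> beta ^+ (d * 2) != 1.
Proof.
move=> hd; have qo := q_odd; have qg := q_gt1.
case: (ltngtP (d * 2) (q - 1)) => h.
- by apply: beta_prim; lia.
- have -> : (d * 2 = (q - 1) + (d * 2 - (q - 1)))%N by lia.
  rewrite exprD beta_ord mul1r; apply: beta_prim.
  apply/andP; split; first by lia.
  by lia.
- by move: qo; rewrite -h oddM andbF.
Qed.

Lemma redR_canc k (x y : F) : redR (beta ^+ k) * x = redR (beta ^+ k) * y -> x = y.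
Proof.
move=> e; have h := congr1 (@redR f) (beta_inv k); rewrite redRM redR1 in h.
by rewrite -[x]mul1r -[y]mul1r -h -!mulrA e.
Qed.

Lemma redR_beta_neq0 k : redR (beta ^+ k) != 0.
Proof.
apply/eqP => e; have h := congr1 (@redR f) (beta_inv k); rewrite redRM redR1 e mulr0 in h.
by move: (oner_neq0 F); rewrite -h eqxx.
Qed.

Lemma sq2 (C : R) : (1 + (C + C)) ^+ 2 = 1.
Proof.
have -> : (1 + (C + C)) ^+ 2 = 1 + (C + C + C + C) * (1 + C) by ring.
by rewrite R4 mul0r addr0.
Qed.

Lemma redR_inj : {in T &, injective (@redR f)}.
Proof.
have key : forall k l, (k < l)%N -> (l < q - 1)%N -> redR (beta ^+ k) = redR (beta ^+ l) -> False.
  move=> k l kl hl e.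
  have h1 : redR (beta ^+ (l - k)) = 1.
    apply: (@redR_canc k); rewrite -redRM -exprD (subnKC (ltnW kl)) mulr1; exact/esym.
  have /redR_half [C hC] : redR (beta ^+ (l - k) - 1) = 0 by rewrite redRB h1 redR1 subrr.
  have : beta ^+ ((l - k) * 2) = 1.
    by rewrite exprM (_ : beta ^+ (l - k) = 1 + (C + C)) ?sq2 // -hC addrC subrK.
  by apply/eqP/no_double; lia.
move=> X Y /teichP[-> | [k hk ->]] /teichP[-> | [l hl ->]] //.
- by rewrite redR0 => /esym/eqP; rewrite (negPf (redR_beta_neq0 _)).
- by rewrite redR0 => /eqP; rewrite (negPf (redR_beta_neq0 _)).
- move=> e; case: (ltngtP k l) => h.
  + by case: (key k l).
  + by case: (key l k) => //; apply/esym.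
  + by rewrite h.
Qed.

Lemma card_F : #|F| = q.
Proof.
by rewrite card_monic_qpoly ?fb_size ?fb_monic ?ltnS ?m_gt0 // card_Fp.
Qed.

Lemma redR_surj (z : F) : exists2 X, X \in T & redR X = z.
Proof.
have : z \in (@redR f) @: T.
  have e : (@redR f) @: T = [set: F].
    apply/eqP; rewrite eqEcard subsetT cardsT card_F card_in_imset ?card_T ?leqnn //.
    by move=> x y hx hy; apply: redR_inj.
  by rewrite e inE.
by case/imsetP => X hX ->; exists X.
Qed.

Definition tl (z : F) : R := odflt 0 [pick X in T | redR X == z].

Lemma tlP (z : F) : tl z \in T /\ redR (tl z) = z.
Proof.
rewrite /tl; case: pickP => [X /andP[hX /eqP]|] //= H.
by case: (redR_surj z) => X hX e; move: (H X); rewrite hX e eqxx.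
Qed.
Lemma tl_T z : tl z \in T. Proof. by case: (tlP z). Qed.
Lemma redR_tl z : redR (tl z) = z. Proof. by case: (tlP z). Qed.
Lemma tl_redR X : X \in T -> tl (redR X) = X.
Proof. by move=> hX; apply: redR_inj; rewrite ?tl_T ?redR_tl. Qed.
Lemma tl_inj : injective tl.
Proof. by move=> x y e; rewrite -(redR_tl x) e redR_tl. Qed.

Lemma Fq_id (z : F) : z ^+ q = z.
Proof. by rewrite -(redR_tl z) -redRX teich_q ?tl_T. Qed.

Local Notation hh := (2 ^ (m - 1))%N.
Lemma hh2 : (hh * 2 = q)%N.
Proof. by rewrite -expnSr subn1 prednK // m_gt0. Qed.

Lemma two_mul (x : R) : 2%:R * x = x + x.
Proof. by rewrite mulr_natl mulr2n. Qed.

Lemma neg_dbl (x : R) : - (x + x) = x + x.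
Proof. by apply/eqP; rewrite eq_sym -subr_eq0 opprK addrA R4. Qed.

Lemma sq_red (w : R) : w ^+ 2 = tl (redR w) ^+ 2.
Proof.
set A := tl (redR w).
have /redR_half [C hC] : redR (w - A) = 0 by rewrite redRB redR_tl subrr.
have -> : w = A + (C + C) by rewrite -hC addrC subrK.
have -> : (A + (C + C)) ^+ 2 = A ^+ 2 + (C + C + C + C) * (A + C) by ring.
by rewrite R4 mul0r addr0.
Qed.

Lemma teich_sqrt (X : R) : X \in T -> (X ^+ hh) ^+ 2 = X.
Proof. by move=> hX; rewrite -exprM hh2 teich_q. Qed.

Arguments teich_sqrt {X}.
Arguments tl_redR {X}.

Lemma teich_add (X Y : R) : X \in T -> Y \in T ->
  (X ^+ hh + Y ^+ hh) ^+ 2 = tl (redR X + redR Y).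
Proof.
move=> hX hY.
have hT : (X ^+ hh + Y ^+ hh) ^+ 2 \in T by rewrite sq_red teichX ?tl_T.
rewrite -(tl_redR hT); congr tl.
have e : (X ^+ hh + Y ^+ hh) ^+ 2 = (X ^+ hh) ^+ 2 + (Y ^+ hh) ^+ 2 + (X ^+ hh * Y ^+ hh + X ^+ hh * Y ^+ hh) by ring.
rewrite (teich_sqrt hX) (teich_sqrt hY) in e.
by rewrite e !redRD F_dbl addr0.
Qed.

Lemma teich_add2 (X Y : R) : X \in T -> Y \in T ->
  X + Y = (X ^+ hh + Y ^+ hh) ^+ 2 + (X ^+ hh * Y ^+ hh + X ^+ hh * Y ^+ hh).
Proof.
move=> hX hY; rewrite -{1}(teich_sqrt hX) -{1}(teich_sqrt hY).
set a := X ^+ hh; set b := Y ^+ hh.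
have -> : a ^+ 2 + b ^+ 2 = (a + b) ^+ 2 - (a * b + a * b) by ring.
by rewrite neg_dbl.
Qed.

Lemma decomp (w : R) : exists C, w = tl (redR w) + (C + C).
Proof.
have /redR_half [C hC] : redR (w - tl (redR w)) = 0 by rewrite redRB redR_tl subrr.
by exists C; rewrite -hC addrC subrK.
Qed.

Lemma sigmaE (A C : R) : A \in T -> sigmaF m beta (A + (C + C)) = A ^+ 2 + (C ^+ 2 + C ^+ 2).
Proof.
move=> hA; rewrite /sigmaF; case: pickP => [[P1 P2] /= /andP[/andP[h1 h2] /eqP e] | H].
  rewrite two_mul in e.
  have e1 : A = P1.
    apply: redR_inj => //; have := congr1 (@redR f) e.
    by rewrite !redRD !F_dbl !addr0.
  rewrite -e1 in e; move/addrI: e => /dbl_eq e2.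
  rewrite two_mul e1; congr (_ + _); apply/dbl_eq.
  by rewrite !redRX e2.
have := H (A, tl (redR C)); rewrite /= hA tl_T /= two_mul.
suff -> : tl (redR C) + tl (redR C) = C + C by rewrite eqxx.
by apply/dbl_eq; rewrite redR_tl.
Qed.

Lemma sigma2 (C : R) : sigmaF m beta (C + C) = C ^+ 2 + C ^+ 2.
Proof. by rewrite -[C + C]add0r sigmaE ?teich0 // expr0n add0r. Qed.

Lemma sigmaD (w w' : R) : sigmaF m beta (w + w') = sigmaF m beta w + sigmaF m beta w'.
Proof.
case: (decomp w) => C ->; case: (decomp w') => C' ->.
set A := tl (redR w); set A' := tl (redR w').
have hA : A \in T by exact: tl_T.
have hA' : A' \in T by exact: tl_T.
rewrite !sigmaE //.
have e := @teich_add2 A A' hA hA'.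
set a := A ^+ hh in e *; set b := A' ^+ hh in e *.
have hS : (a + b) ^+ 2 \in T by rewrite teich_add // tl_T.
have -> : A + (C + C) + (A' + (C' + C')) = (a + b) ^+ 2 + ((a * b + C + C') + (a * b + C + C')).
  by rewrite addrACA e; ring.
rewrite sigmaE // -(teich_sqrt hA) -(teich_sqrt hA') -/a -/b.
set K := a ^+ 3 * b + (a ^+ 2 * b ^+ 2) *+ 2 + a * b ^+ 3 + a * b * C + a * b * C' + C * C'.
have -> : ((a + b) ^+ 2) ^+ 2 + ((a * b + C + C') ^+ 2 + (a * b + C + C') ^+ 2) =
   (a ^+ 2) ^+ 2 + (C ^+ 2 + C ^+ 2) + ((b ^+ 2) ^+ 2 + (C' ^+ 2 + C' ^+ 2)) + (K + K + K + K).
  by rewrite /K; ring.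
by rewrite R4 addr0.
Qed.

Lemma iter_sigmaD j (w w' : R) :
  iter j (sigmaF m beta) (w + w') = iter j (sigmaF m beta) w + iter j (sigmaF m beta) w'.
Proof. by elim: j => [|j IH] //=; rewrite IH sigmaD. Qed.

Lemma iter_sigma2 j (C : R) : iter j (sigmaF m beta) (C + C) = C ^+ (2 ^ j) + C ^+ (2 ^ j).
Proof. by elim: j => [|j IH] /=; rewrite ?expn0 ?expr1 // IH sigma2 -!exprM expnSr. Qed.

Lemma qval_sum (I : Type) (r : seq I) (P : pred I) (G : I -> R) :
  val (\sum_(i <- r | P i) G i) = \sum_(i <- r | P i) val (G i).
Proof. by apply: (big_morph _ (@qvalD f) (erefl _)). Qed.

Lemma trD (w w' : R) : trGR m beta (w + w') = trGR m beta w + trGR m beta w'.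
Proof.
rewrite /trGR (eq_bigr _ (fun (j : 'I_m) _ => iter_sigmaD j w w')) big_split /=.
rewrite -coefD; congr (_`_0); exact: qvalD.
Qed.

Lemma frob2 (x y : F) : (x + y) ^+ 2 = x ^+ 2 + y ^+ 2.
Proof.
have -> : (x + y) ^+ 2 = x ^+ 2 + y ^+ 2 + (x * y + x * y) by ring.
by rewrite F_dbl addr0.
Qed.
Lemma frobX j (x y : F) : (x + y) ^+ (2 ^ j) = x ^+ (2 ^ j) + y ^+ (2 ^ j).
Proof. by elim: j => [|j IH]; rewrite ?expr1 // expnSr !exprM IH frob2. Qed.
Lemma F_neg (x : F) : - x = x.
Proof. by apply/eqP; rewrite eq_sym -subr_eq0 opprK F_dbl. Qed.

Lemma atrD (x y : F) : atr m (x + y) = atr m x + atr m y.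
Proof. by rewrite /atr -big_split; apply: eq_bigr => j _; exact: frobX. Qed.
Lemma atr0 : atr m (0 : F) = 0.
Proof. by rewrite /atr big1 // => j _; rewrite expr0n expn_eq0. Qed.

Lemma m_succ : exists n, m = n.+1.
Proof. by exists m.-1; rewrite prednK // m_gt0. Qed.

Lemma atr_sq (x : F) : atr m (x ^+ 2) = atr m x.
Proof.
have e : forall j, (x ^+ 2) ^+ (2 ^ j) = x ^+ (2 ^ j.+1) by move=> j; rewrite -exprM expnS.
have xq := Fq_id x.
rewrite /atr (eq_bigr _ (fun (j : 'I_m) _ => e j)).
case: m_succ xq => n hn; rewrite hn => xq.
by rewrite big_ord_recr big_ord_recl /= xq addrC.
Qed.

Lemma sum_sq (I : Type) (r : seq I) (P : pred I) (G : I -> F) :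
  (\sum_(i <- r | P i) G i) ^+ 2 = \sum_(i <- r | P i) (G i) ^+ 2.
Proof.
by apply: (big_morph (fun x : F => x ^+ 2) frob2); rewrite expr0n.
Qed.

Lemma atr_sqr (x : F) : atr m x ^+ 2 = atr m x.
Proof.
rewrite -{2}atr_sq /atr sum_sq; apply: eq_bigr => j _.
by rewrite -!exprM mulnC.
Qed.

Lemma F_idem (t : F) : t ^+ 2 = t -> t = 0 \/ t = 1.
Proof.
move=> ht; have [-> | t0] := eqVneq t 0; first by left.
right; case: (redR_surj t) => X /teichP[X0 | [k _ eX]] et.
  by move: t0; rewrite -et X0 redR0 eqxx.
apply: (@redR_canc k); rewrite eX in et; by rewrite et mulr1 -expr2 ht.
Qed.

Lemma atr01 (x : F) : atr m x = 0 \/ atr m x = 1.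
Proof. exact/F_idem/atr_sqr. Qed.

Definition ee (t : F) : algC := if atr m t == 0 then 1 else -1.

Lemma F1_neq0 : (1 : F) != 0. Proof. exact: oner_neq0. Qed.

Lemma ee_1 {t} : atr m t = 1 -> ee t = -1.
Proof. by move=> h; rewrite /ee h (negPf F1_neq0). Qed.
Lemma ee_0 {t} : atr m t = 0 -> ee t = 1.
Proof. by move=> h; rewrite /ee h eqxx. Qed.

Lemma eeD (x y : F) : ee (x + y) = ee x * ee y.
Proof.
case: (atr01 x) => hx; case: (atr01 y) => hy.
- by rewrite (ee_0 hx) (ee_0 hy) (@ee_0 (x + y)) ?mulr1 // atrD hx hy addr0.
- by rewrite (ee_0 hx) (ee_1 hy) (@ee_1 (x + y)) ?mul1r // atrD hx hy add0r.
- by rewrite (ee_1 hx) (ee_0 hy) (@ee_1 (x + y)) ?mulr1 // atrD hx hy addr0.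
- by rewrite (ee_1 hx) (ee_1 hy) (@ee_0 (x + y)) ?mulrNN ?mulr1 // atrD hx hy F_dbl.
Qed.
Lemma ee0 : ee 0 = 1. Proof. by rewrite ee_0 // atr0. Qed.
Lemma ee_sq t : ee (t ^+ 2) = ee t. Proof. by rewrite /ee atr_sq. Qed.
Lemma ee2 t : ee t * ee t = 1.
Proof. by rewrite -eeD F_dbl ee0. Qed.
Lemma ee_eq s t : atr m s = atr m t -> ee s = ee t.
Proof. by rewrite /ee => ->. Qed.

Definition psi (w : R) : algC := iexp m beta w.

Lemma i4 : 'i ^+ 4 = 1 :> algC.
Proof. by rewrite (exprM _ 2 2) sqrCi sqrrN expr1n. Qed.

Lemma psiD (w w' : R) : psi (w + w') = psi w * psi w'.
Proof.
rewrite /psi /iexp trD -exprD.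
have -> : val (trGR m beta w + trGR m beta w') = ((val (trGR m beta w) + val (trGR m beta w')) %% 4)%N by [].
exact: expr_mod i4.
Qed.

Lemma tr0 : trGR m beta 0 = 0.
Proof.
have e := trD 0 0; rewrite addr0 in e.
by apply: (@addrI _ (trGR m beta 0)); rewrite addr0 -e.
Qed.

Lemma psi0 : psi 0 = 1.
Proof. by rewrite /psi /iexp tr0. Qed.

Lemma psiN (w : R) : psi (- w) * psi w = 1.
Proof. by rewrite -psiD addNr psi0. Qed.

Lemma psi_conj (w : R) : (psi w)^* = psi (- w).
Proof.
have h : (psi w)^* * psi w = 1.
  by rewrite -normCKC /psi /iexp normrX normCi !expr1n.
by rewrite -[LHS]mulr1 -(psiN w) mulrCA h mulr1.
Qed.

Lemma psi2 (C : R) : psi (C + C) = ee (redR C).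
Proof.
set P : R := \sum_(j < m) C ^+ (2 ^ j).
have et : trGR m beta (C + C) = (val P)`_0 + (val P)`_0.
  rewrite /trGR (eq_bigr _ (fun (j : 'I_m) _ => iter_sigma2 j C)) big_split /=.
  rewrite -coefD; congr (_`_0); exact: qvalD.
have er : red2 (val P)`_0 = (val (atr m (redR C)))`_0.
  rewrite -coef_map_id0 ?rmorph0 // -redR_val /P redR_sum.
  by rewrite (eq_bigr _ (fun (j : 'I_m) _ => redRX C (2 ^ j))).
rewrite /psi /iexp et.
case: (atr01 (redR C)) => h; rewrite h in er.
  rewrite (ee_0 h) Z4_dbl0 // er; exact: coef0.
rewrite (ee_1 h) Z4_odd ?sqrCi // er; exact: (coef1 _ 0).
Qed.

Lemma F_unit (z : F) : z != 0 -> z \is a GRing.unit.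
Proof.
move=> z0; case: (redR_surj z) => X /teichP[X0 | [k _ eX]] ez.
  by move: z0; rewrite -ez X0 redR0 eqxx.
apply/unitrPr; exists (redR (beta ^+ (k * (q - 2)))).
by rewrite -ez eX -redRM mulrC beta_inv redR1.
Qed.

Lemma uniq_roots_F (s : seq F) : uniq s -> uniq_roots s.
Proof.
elim: s => [|x s IH] //= /andP[xs us]; rewrite IH // andbT.
apply/allP => y ys; rewrite /diff_roots mulrC eqxx /=; apply: F_unit.
by rewrite subr_eq0; apply: contraNneq xs => <-.
Qed.

Lemma atr_nonzero : exists x : F, atr m x != 0.
Proof.
case: (pickP (fun x : F => atr m x != 0)) => [x hx | H]; first by exists x.
exfalso.
have H0 : forall x : F, atr m x = 0 by move=> x; move/negbFE/eqP: (H x).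
pose P : {poly F} := \sum_(j < m) 'X^(2 ^ j).
have hP : forall x, P.[x] = atr m x.
  by move=> x; rewrite /P horner_sum; apply: eq_bigr => j _; rewrite hornerXn.
have P1 : P`_1 = 1.
  rewrite /P coef_sum; case: m_succ => n hn; rewrite hn big_ord_recl /= coefXn /= big1 ?addr0 //.
  move=> j _; rewrite coefXn /bump /= expnS (_ : (1 == 2 * 2 ^ j)%N = false) //.
  apply/negbTE/eqP; have : (0 < 2 ^ j)%N by rewrite expn_gt0.
  lia.
have Pn0 : P != 0 by apply/eqP => e; move: P1; rewrite e coef0 => /esym/eqP; rewrite oner_eq0.
have sP : (size P <= hh.+1)%N.
  apply: (leq_trans (size_sum _ _ _)); apply/bigmax_leqP => j _.
  rewrite size_polyXn ltnS leq_exp2l //; have := ltn_ord j; lia.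
have hall : all (root P) (enum F) by apply/allP => x _; rewrite /root hP H0.
have := @max_ring_poly_roots _ P (enum F) Pn0 hall (@uniq_roots_F _ (enum_uniq F)).
rewrite -cardE card_F => h; have := leq_trans h sP.
have := hh2; have : (0 < hh)%N by rewrite expn_gt0.
lia.
Qed.

Lemma char_sum (c : F) : \sum_(x : F) ee (x * c) = if c == 0 then (q%:R : algC) else 0.
Proof.
have [-> | c0] := eqVneq c 0.
  rewrite (eq_bigr (fun _ => 1)) => [|x _]; last by rewrite mulr0 ee0.
  by rewrite sumr_const card_F.
case: atr_nonzero => x0 hx0.
have hc : c * c^-1 = 1 by rewrite mulrV ?F_unit.
set x1 := x0 * c^-1.
have e1 : ee (x1 * c) = -1.
  by rewrite /x1 -mulrA mulVr ?F_unit // mulr1 /ee (negPf hx0).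
set S := \sum_(x : F) ee (x * c).
have eS : S = S * -1.
  rewrite {1}/S (reindex_inj (addIr x1)) /= /S mulr_suml.
  by apply: eq_bigr => x _; rewrite mulrDl eeD e1.
have : S *+ 2 == 0 by rewrite mulr2n {2}eS mulrN1 subrr.
by rewrite mulrn_eq0 /= => /eqP.
Qed.

Arguments teich_add {X Y}.
Arguments teich_add2 {X Y}.
Variable a : R.
Local Notation u := (redR a).

Definition g (z : F) : algC := psi (a * tl z + 2%:R * tl z ^+ 3).
Definition L (z : F) : F := z ^+ 2 + u ^+ 2 * z + z ^+ hh.

Lemma sqrt_hh (x : F) : (x ^+ hh) ^+ 2 = x.
Proof. by rewrite -exprM hh2 Fq_id. Qed.

Lemma atr_key (z z' : F) :
  atr m (u * (z ^+ hh * z' ^+ hh) + ((z + z') ^+ 3 + z ^+ 3 + z' ^+ 3)) = atr m (z' * L z).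
Proof.
set W := z ^+ 2 * z' + z * z' ^+ 2 + z ^+ 3 + z' ^+ 3.
have e1 : u * (z ^+ hh * z' ^+ hh) + ((z + z') ^+ 3 + z ^+ 3 + z' ^+ 3) =
  u * (z ^+ hh * z' ^+ hh) + z ^+ 2 * z' + z * z' ^+ 2 + (W + W) by rewrite /W; ring.
rewrite e1 F_dbl addr0 !atrD.
have h1 : atr m (u * (z ^+ hh * z' ^+ hh)) = atr m (u ^+ 2 * z * z').
  by rewrite -atr_sq !exprMn !sqrt_hh mulrA.
have h2 : atr m (z * z' ^+ 2) = atr m (z ^+ hh * z').
  by rewrite -(atr_sq (z ^+ hh * z')) exprMn sqrt_hh.
rewrite h1 h2 /L !mulrDr !atrD.
rewrite [z' * z ^+ 2]mulrC [z' * z ^+ hh]mulrC (_ : z' * (u ^+ 2 * z) = u ^+ 2 * z * z'); last by ring.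
by ring.
Qed.

Lemma gadd (z z' : F) : g (z + z') = g z * g z' * ee (z' * L z).
Proof.
set Z := tl z; set Z' := tl z'.
have hZ : Z \in T by exact: tl_T.
have hZ' : Z' \in T by exact: tl_T.
set D := Z ^+ hh * Z' ^+ hh.
have eT : tl (z + z') = Z + Z' + (D + D).
  have e := teich_add2 hZ hZ'.
  rewrite (teich_add hZ hZ') !redR_tl -/D in e.
  by rewrite e -addrA [(D + D) + (D + D)]addrA R4 addr0.
set T' := tl (z + z').
set E := a * D + T' ^+ 3 + Z ^+ 3 + Z' ^+ 3.
set K := Z ^+ 3 + Z' ^+ 3.
have ew : a * T' + 2%:R * T' ^+ 3 + (K + K + K + K) =
   (a * Z + 2%:R * Z ^+ 3) + (a * Z' + 2%:R * Z' ^+ 3) + (E + E).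
  by rewrite /E /K /T' eT; ring.
rewrite R4 addr0 in ew.
rewrite /g -/Z -/Z' -/T' ew psiD psi2 psiD; congr (_ * _).
apply: ee_eq; rewrite -atr_key; congr (atr m _).
by rewrite /E /D !redRD !redRM !redRX /T' /Z /Z' !redR_tl -!addrA.
Qed.

Lemma T_img : T = [set tl z | z in [set: F]].
Proof.
apply/eqP; rewrite eq_sym eqEcard card_in_imset ?cardsT ?card_F ?card_T ?leqnn ?andbT.
  by apply/subsetP => X /imsetP[z _ ->]; exact: tl_T.
by move=> x y _ _; apply: tl_inj.
Qed.

Lemma sum_T (P : pred F) (G : R -> algC) :
  \sum_(Z in T | P (redR Z)) G Z = \sum_(z | P z) G (tl z).
Proof.
rewrite big_mkcondr T_img big_imset /=; last by move=> x y _ _; apply: tl_inj.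
rewrite [RHS]big_mkcond; apply: eq_big => [x|x _]; by rewrite ?inE ?redR_tl.
Qed.

Lemma sum_T0 (G : R -> algC) : \sum_(Z in T) G Z = \sum_z G (tl z).
Proof.
rewrite T_img big_imset /=; last by move=> x y _ _; apply: tl_inj.
by apply: eq_bigl => x; rewrite inE.
Qed.

Lemma LD (x y : F) : L (x + y) = L x + L y.
Proof.
rewrite /L frob2 frobX.
rewrite mulrDr; set A := x ^+ 2; set B := y ^+ 2; set C := x ^+ (2 ^ (m - 1)).
by rewrite -!addrA; congr (_ + _); rewrite !addrA; congr (_ + _); ring.
Qed.

Lemma L0 : L 0 = 0.
Proof. by rewrite /L expr0n mulr0 !add0r expr0n expn_eq0. Qed.

Lemma L_u2 : L (u ^+ 2) = u.
Proof.
rewrite /L -exprM -exprM mulnC hh2 Fq_id -exprD addnn.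
by rewrite (_ : (2 * 2)%N = (2 + 2)%N) // exprD F_dbl add0r.
Qed.

Lemma atr_self (x z : F) : atr m (z * L x) = atr m (x * L z).
Proof.
rewrite /L !mulrDr !atrD.
have h1 : atr m (z * x ^+ 2) = atr m (x * z ^+ hh).
  by rewrite -(atr_sq (x * z ^+ hh)) exprMn sqrt_hh mulrC.
have h2 : atr m (z * x ^+ hh) = atr m (x * z ^+ 2).
  by rewrite -(atr_sq (z * x ^+ hh)) exprMn sqrt_hh mulrC.
rewrite h1 h2 (_ : z * (u ^+ 2 * x) = x * (u ^+ 2 * z)); last by ring.
by ring.
Qed.

Lemma atr_xLx (x : F) : atr m (x * L x) = atr m (u * x).
Proof.
rewrite /L !mulrDr !atrD.
have h1 : atr m (x * (u ^+ 2 * x)) = atr m (u * x).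
  by rewrite -(atr_sq (u * x)) (_ : x * (u ^+ 2 * x) = (u * x) ^+ 2) //; ring.
have h2 : atr m (x * x ^+ hh) = atr m (x * x ^+ 2).
  by rewrite -(atr_sq (x * x ^+ hh)) exprMn sqrt_hh mulrC.
rewrite h1 h2 (_ : atr m (x * x ^+ 2) + atr m (u * x) + atr m (x * x ^+ 2) =
   atr m (u * x) + (atr m (x * x ^+ 2) + atr m (x * x ^+ 2))); last by ring.
by rewrite F_dbl addr0.
Qed.

Lemma atr_uz (z : F) : L z = 0 -> atr m (u * z) = 0.
Proof. by move=> hz; rewrite -{1}L_u2 mulrC atr_self hz mulr0 atr0. Qed.

Lemma tl0 : tl 0 = 0.
Proof. by rewrite -redR0 tl_redR ?teich0. Qed.

Lemma g0 : g 0 = 1.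
Proof. by rewrite /g tl0 mulr0 expr0n mulr0 addr0 psi0. Qed.

Lemma pair_key (x z : F) : g x * g (x + z) = g z * ee (x * (L z + u)).
Proof.
have e := gadd x (x + z); rewrite addrA F_dbl add0r in e.
have -> : ee (x * (L z + u)) = ee ((x + z) * L x).
  apply: ee_eq; rewrite mulrDl atrD atr_xLx atr_self mulrDr atrD addrC.
  by rewrite mulrC.
by rewrite e -mulrA ee2 mulr1.
Qed.

Lemma F_sum_shift (G : F -> algC) (x : F) : \sum_(y : F) G y = \sum_(z : F) G (x + z).
Proof. exact: (reindex_inj (addrI x)). Qed.

Lemma sum_if (c : F -> F) (G : F -> algC) :
  \sum_(z : F) G z * (if c z == 0 then (q%:R : algC) else 0) = q%:R * \sum_(z | c z == 0) G z.
Proof.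
rewrite mulr_sumr [RHS]big_mkcond /=; apply: eq_bigr => z _.
by case: ifP; rewrite ?mulr0 // mulrC.
Qed.

Lemma eta_F : etaGR m beta a = \sum_(z : F) g z.
Proof. by rewrite /etaGR sum_T0. Qed.

Lemma eta_sq : (\sum_(z : F) g z) ^+ 2 = q%:R * \sum_(z | L z + u == 0) g z.
Proof.
rewrite expr2 mulr_suml.
rewrite (eq_bigr (fun x => \sum_(z : F) g z * ee (x * (L z + u)))); last first.
  move=> x _; rewrite mulr_sumr (F_sum_shift _ x); apply: eq_bigr => z _.
  exact: pair_key.
rewrite exchange_big /= -sum_if; apply: eq_bigr => z _.
by rewrite -mulr_sumr char_sum.
Qed.

Lemma g_conj (y : F) : (g y)^* = g y * ee (u * y).
Proof.
rewrite /g psi_conj; set w := a * tl y + 2%:R * tl y ^+ 3.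
have -> : - w = w + (w + w) by rewrite -[- w]addr0 -(R4 w); ring.
rewrite psiD psi2; congr (_ * _); apply: ee_eq; congr (atr m _).
by rewrite /w redRD two_mul redRD F_dbl addr0 redRM redR_tl.
Qed.

Lemma eta_conj : (\sum_(z : F) g z) * (\sum_(z : F) g z)^* = q%:R * \sum_(z | L z == 0) g z.
Proof.
rewrite rmorph_sum (eq_bigr _ (fun y _ => g_conj y)) mulr_suml.
rewrite (eq_bigr (fun x => \sum_(z : F) g z * ee (u * z) * ee (x * L z))); last first.
  move=> x _; rewrite mulr_sumr (F_sum_shift _ x); apply: eq_bigr => z _.
  rewrite mulrA pair_key -!mulrA -!eeD; congr (_ * _).
  apply: ee_eq; congr (atr m _).
  have -> : x * (L z + u) + u * (x + z) = u * z + x * L z + (u * x + u * x) by ring.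
  by rewrite F_dbl addr0.
rewrite exchange_big /= -sum_if; apply: eq_bigr => z _.
rewrite -mulr_sumr char_sum.
have [hz | hz] := eqVneq (L z) 0.
  by rewrite (ee_0 (atr_uz _ hz)) mulr1.
by rewrite !mulr0.
Qed.

Lemma sqrtF_hh (z : F) : sqrtF z = z ^+ hh.
Proof.
rewrite /sqrtF; case: pickP => [y /eqP hy | H] /=; last first.
  by move: (H (z ^+ hh)); rewrite sqrt_hh eqxx.
have hv : (y + z ^+ hh) ^+ 2 = 0 by rewrite frob2 hy sqrt_hh F_dbl.
have : y + z ^+ hh = 0.
  by rewrite -[LHS]Fq_id -hh2 mulnC exprM hv expr0n expn_eq0.
by move/eqP; rewrite addr_eq0 F_neg => /eqP.
Qed.

Lemma f_uE z : f_u u z = L z + u.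
Proof. by rewrite /f_u sqrtF_hh. Qed.
Lemma h_uE z : h_u u z = L z.
Proof. by rewrite /h_u sqrtF_hh. Qed.

Definition Hset := [set z : F | L z == 0].

Lemma card_Fu : #|Fu u| = #|Hset|.
Proof.
have -> : Fu u = [set h + u ^+ 2 | h in Hset].
  apply/setP => z; rewrite /Fu !inE f_uE; apply/idP/imsetP => [hz | [h hh0 ->]].
    exists (z + u ^+ 2); last by rewrite -addrA F_dbl addr0.
    by rewrite inE LD L_u2.
  by move: hh0; rewrite inE LD L_u2 -addrA F_dbl addr0.
by rewrite card_imset //; exact: addIr.
Qed.

Lemma g_char h0 z : L h0 = 0 -> g (h0 + z) = g h0 * g z.
Proof. by move=> h; rewrite gadd h mulr0 ee0 mulr1. Qed.

Lemma g_sq h0 : L h0 = 0 -> g h0 * g h0 = 1.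
Proof. by move=> h; rewrite -g_char // F_dbl g0. Qed.

Local Notation S := (\sum_(z | L z == 0) g z).

Lemma S_shift h0 : L h0 = 0 -> S * g h0 = S.
Proof.
move=> h; rewrite mulr_suml [RHS](reindex_inj (addrI h0)) /=.
apply: eq_big => [z | z _]; first by rewrite LD h add0r.
by rewrite g_char // mulrC.
Qed.

Lemma S_sq : S ^+ 2 = (#|Hset|%:R : algC) * S.
Proof.
case: (pickP (fun h => (L h == 0) && (g h != 1))) => [h0 /andP[/eqP hh0 hg] | H].
  have gm : g h0 = -1.
    have : (g h0 - 1) * (g h0 + 1) = 0.
      have e1 : (g h0 - 1) * (g h0 + 1) = g h0 * g h0 - 1 by ring.
      by rewrite e1 g_sq // subrr.
    move/eqP; rewrite mulf_eq0 subr_eq0 (negPf hg) /= addr_eq0 => /eqP //.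
  have : S *+ 2 == 0 by rewrite mulr2n -{1}(S_shift _ hh0) gm mulrN1 addNr.
  by rewrite mulrn_eq0 /= => /eqP ->; rewrite expr0n mulr0.
have eS : S = #|Hset|%:R.
  rewrite (eq_bigr (fun _ => 1)) => [|z /eqP hz]; last first.
    by move: (H z); rewrite hz eqxx /= => /negbFE/eqP.
  by rewrite sumr_const; congr (_ *+ _); apply: eq_card => z; rewrite inE.
by rewrite expr2 {1}eS.
Qed.

Lemma eta_sq2 : \sum_(z | L z + u == 0) g z = g (u ^+ 2) * S.
Proof.
rewrite mulr_sumr (reindex_inj (addIr (u ^+ 2))) /=.
apply: eq_big => [z | z /eqP hz]; first by rewrite LD L_u2 -addrA F_dbl addr0.
rewrite gadd.
have hz' : L z = 0 by move: hz; rewrite LD L_u2 -addrA F_dbl addr0.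
by rewrite hz' mulr0 ee0 mulr1 mulrC.
Qed.

Lemma gu2_sq : g (u ^+ 2) ^+ 2 = ee (u ^+ 3).
Proof.
rewrite expr2 /g -psiD psi2; apply: ee_eq; congr (atr m _).
by rewrite redRD redRM redR_tl two_mul redRD F_dbl addr0 -exprS.
Qed.

Lemma main_sec :
  let u := redR a in
  let e := etaGR m beta a in
  let q : algC := (2 ^ m)%:R in
  let sgn : algC := if atr m (u ^+ 3) == 0 then 1 else -1 in
  let nF : algC := (#|Fu u|)%:R in
  [/\ e ^+ 2 = q * \sum_(Z in teich m beta | f_u u (redR Z) == 0)
                     iexp m beta (a * Z + 2%:R * Z ^+ 3),
      e * e^* = q * \sum_(Z in teich m beta | h_u u (redR Z) == 0)
                     iexp m beta (a * Z + 2%:R * Z ^+ 3),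
      e ^+ 4 = q * sgn * nF * (e * e^*),
      (e * e^*) ^+ 2 = q * nF * (e * e^*)
    & e ^+ 3 * e^* = q * nF * e ^+ 2].
Proof.
move=> u0 e q0 sgn nF.
have E1 : e ^+ 2 = q0 * \sum_(z | L z + u == 0) g z by rewrite /e eta_F eta_sq.
have E2 : e * e^* = q0 * S by rewrite /e eta_F eta_conj.
have R1 : \sum_(Z in teich m beta | f_u u (redR Z) == 0) iexp m beta (a * Z + 2%:R * Z ^+ 3)
   = \sum_(z | L z + u == 0) g z.
  by rewrite (sum_T (fun z => f_u u z == 0)); apply: eq_bigl => z; rewrite f_uE.
have R2 : \sum_(Z in teich m beta | h_u u (redR Z) == 0) iexp m beta (a * Z + 2%:R * Z ^+ 3)
   = S.
  by rewrite (sum_T (fun z => h_u u z == 0)); apply: eq_bigl => z; rewrite h_uE.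
have hnF : nF = #|Hset|%:R by rewrite /nF card_Fu.
have hsgn : sgn = ee (u ^+ 3) by [].
rewrite eta_sq2 in E1.
have SS := S_sq; have G2 := gu2_sq.
split.
- by rewrite E1 R1 eta_sq2.
- by rewrite E2 R2.
- rewrite (_ : e ^+ 4 = (e ^+ 2) ^+ 2); last by rewrite -exprM.
  rewrite E1 E2 hnF hsgn -G2.
  rewrite (_ : (q0 * (g (u ^+ 2) * S)) ^+ 2 = q0 ^+ 2 * g (u ^+ 2) ^+ 2 * S ^+ 2); last by ring.
  by rewrite SS; ring.
- rewrite E2 hnF (_ : (q0 * S) ^+ 2 = q0 ^+ 2 * S ^+ 2); last by ring.
  by rewrite SS; ring.
- rewrite (_ : e ^+ 3 * e^* = e ^+ 2 * (e * e^*)); last by ring.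
  rewrite E1 E2 hnF.
  rewrite (_ : q0 * (g (u ^+ 2) * S) * (q0 * S) = q0 ^+ 2 * g (u ^+ 2) * S ^+ 2); last by ring.
  by rewrite SS; ring.
Qed.

End Main.

Theorem lemmaC1 (m : nat) (f : {poly 'Z_4})
  (f_monic : f \is monic) (f_size : size f = m.+1)
  (f_irr : irreducible_poly (fbar f))
  (beta : GR f)
  (beta_ord : beta ^+ (2 ^ m - 1) = 1)
  (beta_prim : forall k : nat, (0 < k < 2 ^ m - 1)%N -> beta ^+ k != 1)
  (a : GR f) :
  let u := redR a in
  let e := etaGR m beta a in
  let q : algC := (2 ^ m)%:R in
  let sgn : algC := if atr m (u ^+ 3) == 0 then 1 else -1 in
  let nF : algC := (#|Fu u|)%:R in
  [/\ e ^+ 2 = q * \sum_(Z in teich m beta | f_u u (redR Z) == 0)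
                     iexp m beta (a * Z + 2%:R * Z ^+ 3),
      e * e^* = q * \sum_(Z in teich m beta | h_u u (redR Z) == 0)
                     iexp m beta (a * Z + 2%:R * Z ^+ 3),
      e ^+ 4 = q * sgn * nF * (e * e^*),
      (e * e^*) ^+ 2 = q * nF * (e * e^*)
    & e ^+ 3 * e^* = q * nF * e ^+ 2].
Proof. exact: (@main_sec m f f_monic f_size f_irr beta beta_ord beta_prim a). Qed.
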